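(* Let $(A,\mu,E,\Delta,\epsilon)$ be a weak multiplier bialgebra over a field $k$. The following are equivalent: (1) $E=1$ in $\mathbb M(A\otimes A)$; (2) $\epsilon(ab)=\epsilon(a)\epsilon(b)$ for all $a,b\in A$; (3) $\overline\sqcap^L(a)=\epsilon(a)1$ in $\mathbb M(A)$ for all $a\in A$; (4) $\overline\sqcap^R(a)=\epsilon(a)1$ in $\mathbb M(A)$ for all $a\in A$.
   Context: Let $k$ be a field, $\otimes=\otimes_k$. A non-unital $k$-algebra $A$ with multiplication $\mu(a\otimes b)=ab$ is idempotent if $\mu$ is surjective and has non-degenerate multiplication if ($ab=0\ \forall a$)$\Rightarrow b=0$ and ($ba=0\ \forall a$)$\Rightarrow b=0$. Its multiplier algebra $\mathbb M(A)$ consists of pairs $(\lambda,\rho)$ of linear maps $A\to A$ with $a\lambda(b)=\rho(a)b$ (product $(\lambda',\rho')(\lambda,\rho)=(\lambda'\lambda,\rho\rho')$, unit $1=(\mathrm{id},\mathrm{id})$), containing $A$ as a dense two-sided ideal; $A\otimes A\subseteq\mathbb M(A)\otimes\mathbb M(A)\subseteq\mathbb M(A\otimes A)$. $\langle X\rangle$ is linear span; multiplicative $\gamma:A\to\mathbb M(B)$ with idempotent $e\in\mathbb M(B)$, $\langle\gamma(a)b\rangle=eB$, $\langle b\gamma(a)\rangle=Be$, extends uniquely to multiplicative $\overline\gamma:\mathbb M(A)\to\mathbb M(B)$ with $\overline\gamma(1)=e$. A weak multiplier bialgebra: idempotent $A$ with non-degenerate multiplication, idempotent $E\in\mathbb M(A\otimes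 A)$, multiplicative linear $\Delta:A\to\mathbb M(A\otimes A)$, linear $\epsilon:A\to k$ with: (i) $T_1(a\otimes b):=\Delta(a)(1\otimes b)$, $T_2(a\otimes b):=(a\otimes1)\Delta(b)$ lie in $A\otimes A$; (ii) $(T_2\otimes\mathrm{id})(\mathrm{id}\otimes T_1)=(\mathrm{id}\otimes T_1)(T_2\otimes\mathrm{id})$; (iii) $(\epsilon\otimes\mathrm{id})T_1=\mu=(\mathrm{id}\otimes\epsilon)T_2$; (iv) $\langle\Delta(a)(b\otimes b')\rangle=\langle E(b\otimes b')\rangle$ and $\langle(b\otimes b')\Delta(a)\rangle=\langle(b\otimes b')E\rangle$; (v) $(E\otimes1)(1\otimes E)=E^{(3)}=(1\otimes E)(E\otimes1)$ with $E^{(3)}:=(\overline{\mathrm{id}\otimes\Delta})(E)=(\overline{\Delta\otimes\mathrm{id}})(E)$; (vi) $(\epsilon\otimes\mathrm{id})((1\otimes a)E(b\otimes c))=(\epsilon\otimes\mathrm{id})(\Delta(a)(b\otimes c))$ and $(\epsilon\otimes\mathrm{id})((a\otimes b)E(1\otimes c))=(\epsilon\otimes\mathrm{id})((a\otimes b)\Delta(c))$. For $a\in A$: $\overline\sqcap^L(a)\in\mathbb M(A)$ is the multiplier with $\overline\sqcap^L(a)b=(\epsilon\otimes\mathrm{id})((a\otimes1)\Delta(b))$ and $b\overline\sqcap^L(a)=(\epsilon\otimes\mathrm{id})((a\otimes b)E)$; $\overline\sqcap^R(a)\in\mathbb M(A)$ is the multiplier with $b\overline\sqcap^R(a)=(\mathrm{id}\otimes\epsilon)(\Delta(b)(1\otimes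 a))$ and $\overline\sqcap^R(a)b=(\mathrm{id}\otimes\epsilon)(E(b\otimes a))$. *)

(* Defs.v *)
From HB Require Import structures.
From mathcomp Require Import all_boot all_algebra.
From Stdlib Require Import ClassicalEpsilon.
Set Implicit Arguments.
Unset Strict Implicit.
Unset Printing Implicit Defensive.
Import GRing.Theory.
Local Open Scope ring_scope.

Section WMBA.
Variable k : fieldType.

Definition islin (U W : lmodType k) (f : U -> W) :=
  forall (c : k) (x y : U), f (c *: x + y) = c *: f x + f y.

Definition bilin (U V W : lmodType k) (f : U -> V -> W) :=
  (forall v, islin (fun u => f u v)) /\ (forall u, islin (f u)).

(* A tensor product U (x)_k V: a k-vector space with a bilinear map
   (u,v) |-> u (x) v, spanned by simple tensors and satisfying the universal
   property for bilinear maps (hence unique up to unique isomorphism). *)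
Record tensor (U V : lmodType k) := Tensor {
  tsp :> lmodType k;
  tm : U -> V -> tsp;
  tm_bilin : bilin tm;
  tm_span : forall x : tsp, exists s : seq (U * V),
      x = \sum_(p <- s) tm p.1 p.2;
  tm_univ : forall (W : lmodType k) (f : U -> V -> W), bilin f ->
      exists g : tsp -> W, islin g /\ forall u v, g (tm u v) = f u v }.

(* the linear map T -> W induced by a bilinear map f : U -> V -> W
   (computed on a chosen decomposition into simple tensors; well defined
   by the universal property when f is bilinear) *)
Definition tlift (U V : lmodType k) (T : tensor U V) (W : lmodType k)
  (f : U -> V -> W) (x : T) : W :=
  \sum_(p <- proj1_sig (constructive_indefinite_description _ (tm_span x)))
    f p.1 p.2.

Definition inspan (I : Type) (W : lmodType k) (f : I -> W) (x : W) :=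
  exists s : seq (k * I), x = \sum_(p <- s) p.1 *: f p.2.

(* (L,R) is a multiplier of the (non-unital) algebra (T, m):
   L, R linear and  x L(y) = R(x) y *)
Definition is_mult (T : lmodType k) (m : T -> T -> T) (L R : T -> T) :=
  [/\ islin L, islin R & forall x y, m x (L y) = m (R x) y].

Variables (A : lmodType k) (mul : A -> A -> A).
Variables (AA : tensor A A) (A3 : tensor A AA).

Definition t := tm AA.
Definition t3 := tm A3.

Definition mAA (x y : AA) : AA :=
  tlift (fun a b => tlift (fun c d => t (mul a c) (mul b d)) y) x.
Definition m3 (u v : A3) : A3 :=
  tlift (fun a w => tlift (fun a' w' => t3 (mul a a') (mAA w w')) v) u.

Definition mu (x : AA) : A := tlift mul x.

Variable eps : A -> k.
Definition epsl (x : AA) : A := tlift (fun a b => eps a *: b) x.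
Definition epsr (x : AA) : A := tlift (fun a b => eps b *: a) x.

Definition lmul1b (b : A) (y : AA) : AA := tlift (fun p q => t p (mul b q)) y.
Definition rmul1b (b : A) (y : AA) : AA := tlift (fun p q => t p (mul q b)) y.
Definition lmulb1 (b : A) (y : AA) : AA := tlift (fun p q => t (mul b p) q) y.
Definition rmulb1 (b : A) (y : AA) : AA := tlift (fun p q => t (mul p b) q) y.

(* A (x) A (x) A is modelled as A (x) (A (x) A);  (z (x) c) for z in A(x)A *)
Definition reassoc (z : AA) (c : A) : A3 := tlift (fun x y => t3 x (t y c)) z.
Definition ten1 (F : AA -> AA) (g : A -> A) (u : A3) : A3 :=
  tlift (fun a w => tlift (fun b c => reassoc (F (t a b)) (g c)) w) u.
Definition one_ten (g : A -> A) (F : AA -> AA) (u : A3) : A3 :=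
  tlift (fun a w => t3 (g a) (F w)) u.

Variables (EL ER : AA -> AA) (DL DR : A -> AA -> AA).
(* E = (EL,ER) in M(A(x)A);  Delta(a) = (DL a, DR a) in M(A(x)A) *)

(* (id (x) Delta)(x) in M(A(x)A(x)A), left and right actions *)
Definition idDL (x : AA) (u : A3) : A3 :=
  tlift (fun a b => one_ten (mul a) (DL b) u) x.
Definition idDR (x : AA) (u : A3) : A3 :=
  tlift (fun a b => one_ten (fun a' => mul a' a) (DR b) u) x.
(* (Delta (x) id)(x) in M(A(x)A(x)A) *)
Definition DidL (x : AA) (u : A3) : A3 :=
  tlift (fun a b => ten1 (DL a) (mul b) u) x.
Definition DidR (x : AA) (u : A3) : A3 :=
  tlift (fun a b => ten1 (DR a) (fun c => mul c b) u) x.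

(* (YL,YR) = \overline gamma (E) for gamma = (gL,gR) : A(x)A -> M(B) with
   \overline gamma(1) = e = (eL,eR): the unique element with
   \overline gamma(E) gamma(x) = gamma(E x), gamma(x) \overline gamma(E) =
   gamma(x E) and \overline gamma(E) = \overline gamma(E) e = e \overline gamma(E). *)
Definition is_ext (gL gR : AA -> A3 -> A3) (eL eR : A3 -> A3)
  (YL YR : A3 -> A3) :=
  [/\ forall x y, YL (gL x y) = gL (EL x) y,
      forall x y, YR (gR x y) = gR (ER x) y,
      (forall y, YL (eL y) = YL y) /\ (forall y, eL (YL y) = YL y) &
      (forall y, YR (eR y) = YR y) /\ (forall y, eR (YR y) = YR y)].

Variables (T1 T2 : AA -> AA).

Record is_wmba : Prop := {
  mul_bilin : bilin mul;
  mul_assoc : forall a b c, mul a (mul b c) = mul (mul a b) c;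
  A_idem : forall x : A, exists y : AA, mu y = x;
  A_nondeg_l : forall b, (forall a, mul a b = 0) -> b = 0;
  A_nondeg_r : forall b, (forall a, mul b a = 0) -> b = 0;
  E_mult : is_mult mAA EL ER;
  E_idem : (forall x, EL (EL x) = EL x) /\ (forall x, ER (ER x) = ER x);
  D_mult : forall a, is_mult mAA (DL a) (DR a);
  D_lin : forall c a a' y, DL (c *: a + a') y = c *: DL a y + DL a' y /\
                           DR (c *: a + a') y = c *: DR a y + DR a' y;
  D_multiplicative : forall a b y, DL (mul a b) y = DL a (DL b y) /\
                                   DR (mul a b) y = DR b (DR a y);
  eps_lin : forall c a b, eps (c *: a + b) = c * eps a + eps b;
  (* (i): T1(a(x)b) = Delta(a)(1(x)b) and T2(a(x)b) = (a(x)1)Delta(b)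
     lie in A(x)A; T1, T2 are the induced linear maps *)
  T1_lin : islin T1;
  T2_lin : islin T2;
  T1_def : forall a b y, mAA (T1 (t a b)) y = DL a (lmul1b b y) /\
                         mAA y (T1 (t a b)) = rmul1b b (DR a y);
  T2_def : forall a b y, mAA (T2 (t a b)) y = lmulb1 a (DL b y) /\
                         mAA y (T2 (t a b)) = DR b (rmulb1 a y);
  ax_ii : forall u, ten1 T2 id (one_ten id T1 u) = one_ten id T1 (ten1 T2 id u);
  ax_iii : forall x, epsl (T1 x) = mu x /\ epsr (T2 x) = mu x;
  ax_iv_l : forall x, inspan (fun p : A * A * A => DL p.1.1 (t p.1.2 p.2)) x <->
                      inspan (fun p : A * A => EL (t p.1 p.2)) x;
  ax_iv_r : forall x, inspan (fun p : A * A * A => DR p.1.1 (t p.1.2 p.2)) x <->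
                      inspan (fun p : A * A => ER (t p.1 p.2)) x;
  (* (v): E^(3) = \overline{id(x)Delta}(E) = \overline{Delta(x)id}(E)
     and (E(x)1)(1(x)E) = E^(3) = (1(x)E)(E(x)1) *)
  ax_v : exists E3L E3R : A3 -> A3,
    [/\ is_mult m3 E3L E3R,
        is_ext idDL idDR (one_ten id EL) (one_ten id ER) E3L E3R,
        is_ext DidL DidR (ten1 EL id) (ten1 ER id) E3L E3R,
        (forall u, ten1 EL id (one_ten id EL u) = E3L u) /\
        (forall u, one_ten id ER (ten1 ER id u) = E3R u) &
        (forall u, one_ten id EL (ten1 EL id u) = E3L u) /\
        (forall u, ten1 ER id (one_ten id ER u) = E3R u)];
  ax_vi_1 : forall a b c, epsl (lmul1b a (EL (t b c))) = epsl (DL a (t b c));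
  ax_vi_2 : forall a b c, epsl (rmul1b c (ER (t a b))) = epsl (DR c (t a b))
}.

(* \overline\sqcap^L(a) and \overline\sqcap^R(a): left and right actions *)
Definition PiL_l (a b : A) : A := epsl (T2 (t a b)).
Definition PiL_r (a b : A) : A := epsl (ER (t a b)).
Definition PiR_r (a b : A) : A := epsr (T1 (t b a)).
Definition PiR_l (a b : A) : A := epsr (EL (t b a)).

End WMBA.

(* Main.v *)
Require Import Defs.
From mathcomp Require Import all_boot all_algebra.
From Stdlib Require Import ClassicalEpsilon Classical.
Set Implicit Arguments.
Unset Strict Implicit.
Unset Printing Implicit Defensive.
Import GRing.Theory.
Local Open Scope ring_scope.

Section Gen.
Variable k : fieldType.

Lemma lin0 (U W : lmodType k) (f : U -> W) : islin f -> f 0 = 0.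
Proof.
move=> Hf; have := Hf 1 0 0; rewrite !scale1r addr0 => E.
by apply: (addrI (f 0)); rewrite addr0 -E.
Qed.

Lemma linD (U W : lmodType k) (f : U -> W) x y : islin f -> f (x + y) = f x + f y.
Proof. by move=> Hf; have := Hf 1 x y; rewrite !scale1r. Qed.

Lemma linZ (U W : lmodType k) (f : U -> W) c x : islin f -> f (c *: x) = c *: f x.
Proof. by move=> Hf; have := Hf c x 0; rewrite !addr0 (lin0 Hf) addr0. Qed.

Lemma linN (U W : lmodType k) (f : U -> W) x : islin f -> f (- x) = - f x.
Proof. by move=> Hf; rewrite -scaleN1r linZ // scaleN1r. Qed.

Lemma linB (U W : lmodType k) (f : U -> W) x y : islin f -> f (x - y) = f x - f y.
Proof. by move=> Hf; rewrite linD // linN. Qed.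

Lemma lin_sum (U W : lmodType k) (f : U -> W) (I : Type) (s : seq I) F :
  islin f -> f (\sum_(i <- s) F i) = \sum_(i <- s) f (F i).
Proof.
move=> Hf; elim: s => [|i s IH]; first by rewrite !big_nil lin0.
by rewrite !big_cons linD // IH.
Qed.

Lemma islin_comp (U V W : lmodType k) (f : V -> W) (g : U -> V) :
  islin f -> islin g -> islin (fun x => f (g x)).
Proof. by move=> Hf Hg c x y; rewrite Hg Hf. Qed.

Lemma islin_id (U : lmodType k) : islin (fun x : U => x).
Proof. by []. Qed.

Section Tens.
Variables (U V : lmodType k) (T : tensor U V).

Lemma tlift_eq (W : lmodType k) (f : U -> V -> W) (g : T -> W) :
  islin g -> (forall u v, g (tm T u v) = f u v) -> forall x, tlift f x = g x.
Proof.
move=> Hg Hgf x; rewrite /tlift; case: constructive_indefinite_description => s /= Hs.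
by rewrite [in RHS]Hs lin_sum //; apply: eq_bigr => p _; rewrite Hgf.
Qed.

Lemma tlift_t (W : lmodType k) (f : U -> V -> W) : bilin f ->
  forall u v, tlift (T:=T) f (tm T u v) = f u v.
Proof.
move=> Hf u v; have [g [Hg Hgf]] := tm_univ T Hf.
by rewrite (tlift_eq Hg Hgf).
Qed.

Lemma tlift_lin (W : lmodType k) (f : U -> V -> W) : bilin f -> islin (tlift (T:=T) f).
Proof.
move=> Hf; have [g [Hg Hgf]] := tm_univ T Hf.
by move=> c x y; rewrite !(tlift_eq Hg Hgf).
Qed.

Lemma tlift_ext (W : lmodType k) (f g : U -> V -> W) (x : T) :
  (forall u v, f u v = g u v) -> tlift f x = tlift g x.
Proof. by move=> Hfg; rewrite /tlift; apply: eq_bigr => p _; rewrite Hfg. Qed.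

Lemma tlift_map (W W' : lmodType k) (L : W -> W') (f : U -> V -> W) (x : T) :
  islin L -> L (tlift f x) = tlift (fun u v => L (f u v)) x.
Proof. by move=> HL; rewrite /tlift lin_sum. Qed.

Lemma tlift_linf (W : lmodType k) (f g : U -> V -> W) (c : k) (x : T) :
  tlift (fun u v => c *: f u v + g u v) x = c *: tlift f x + tlift g x.
Proof. by rewrite /tlift big_split /= scaler_sumr. Qed.

Lemma tlift_lin_param (Y W : lmodType k) (G : U -> V -> Y -> W) (x : T) :
  (forall u v, islin (G u v)) -> islin (fun y => tlift (fun u v => G u v y) x).
Proof.
move=> HG c y y'; rewrite -tlift_linf; apply: tlift_ext => u v; exact: HG.
Qed.

Lemma bilin_tlift_param (P Q W : lmodType k) (F : P -> Q -> U -> V -> W) (x : T) :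
  (forall u v, bilin (fun p q => F p q u v)) -> bilin (fun p q => tlift (F p q) x).
Proof.
move=> HF; split.
- move=> q c p p'; rewrite -tlift_linf; apply: tlift_ext => u v.
  exact: (proj1 (HF u v) q).
- move=> p c q q'; rewrite -tlift_linf; apply: tlift_ext => u v.
  exact: (proj2 (HF u v) p).
Qed.

Lemma tensor_ext (W : lmodType k) (g1 g2 : T -> W) :
  islin g1 -> islin g2 -> (forall u v, g1 (tm T u v) = g2 (tm T u v)) ->
  forall x, g1 x = g2 x.
Proof.
move=> H1 H2 H x; have [s ->] := tm_span x.
by rewrite !lin_sum //; apply: eq_bigr => p _.
Qed.

Lemma tlift_scale (W : lmodType k) (f : U -> V -> W) (c : k) (x : T) :
  tlift (fun u v => c *: f u v) x = c *: tlift f x.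
Proof. by rewrite /tlift scaler_sumr. Qed.

End Tens.
End Gen.

Section WM.
Variables (k : fieldType) (A : lmodType k) (mul : A -> A -> A)
  (AA : tensor A A) (A3 : tensor A AA)
  (EL ER : AA -> AA) (DL DR : A -> AA -> AA) (eps : A -> k)
  (T1 T2 : AA -> AA).
Hypothesis H : is_wmba mul A3 eps EL ER DL DR T1 T2.

Local Notation tA := (t AA).
Local Notation t3A := (t3 A3).
Local Notation mAA := (mAA mul (AA:=AA)).
Local Notation el := (epsl eps (AA:=AA)).
Local Notation er := (epsr eps (AA:=AA)).

Lemma mul_l a : islin (mul a). Proof. exact: (proj2 (mul_bilin H) a). Qed.
Lemma mul_r b : islin (fun a => mul a b). Proof. exact: (proj1 (mul_bilin H) b). Qed.
Lemma t_l v : islin (fun u => tA u v). Proof. exact: (proj1 (tm_bilin AA) v). Qed.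
Lemma t_r u : islin (tA u). Proof. exact: (proj2 (tm_bilin AA) u). Qed.
Lemma t3_l v : islin (fun u => t3A u v). Proof. exact: (proj1 (tm_bilin A3) v). Qed.
Lemma t3_r u : islin (t3A u). Proof. exact: (proj2 (tm_bilin A3) u). Qed.
Lemma EL_lin : islin EL. Proof. by case: (E_mult H). Qed.
Lemma ER_lin : islin ER. Proof. by case: (E_mult H). Qed.
Lemma DL_lin a : islin (DL a). Proof. by case: (D_mult H a). Qed.
Lemma DR_lin a : islin (DR a). Proof. by case: (D_mult H a). Qed.
Lemma eps_islin : islin (eps : A -> k^o).
Proof. move=> c x y; exact: (eps_lin H). Qed.

Lemma bilin_comp (U V P Q W : lmodType k) (f : P -> Q -> W) (g : U -> P) (h : V -> Q) :
  bilin f -> islin g -> islin h -> bilin (fun u v => f (g u) (h v)).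
Proof.
move=> [Hf1 Hf2] Hg Hh; split=> [v|u] c x y /=.
- by rewrite Hg Hf1.
- by rewrite Hh Hf2.
Qed.

Lemma bilin_t : bilin tA. Proof. exact: tm_bilin. Qed.

Lemma bilin_tm a b : bilin (fun c d => tA (mul a c) (mul b d)).
Proof. exact: (bilin_comp bilin_t (mul_l a) (mul_l b)). Qed.

Lemma bilin_tm' c d : bilin (fun a b => tA (mul a c) (mul b d)).
Proof. exact: (bilin_comp bilin_t (mul_r c) (mul_r d)). Qed.

Lemma bilin_mAA_out (y : AA) : bilin (fun a b => tlift (fun c d => tA (mul a c) (mul b d)) y).
Proof. by apply: bilin_tlift_param => u v; exact: bilin_tm'. Qed.

Lemma mAA_tl a b y : mAA (tA a b) y = tlift (fun c d => tA (mul a c) (mul b d)) y.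
Proof. by rewrite /Defs.mAA /t tlift_t //; exact: bilin_mAA_out. Qed.

Lemma mAA_tr x c d : mAA x (tA c d) = tlift (fun a b => tA (mul a c) (mul b d)) x.
Proof. by rewrite /Defs.mAA; apply: tlift_ext => a b; rewrite /t tlift_t //; exact: bilin_tm. Qed.

Lemma mAA_t a b c d : mAA (tA a b) (tA c d) = tA (mul a c) (mul b d).
Proof. by rewrite mAA_tl /t tlift_t //; exact: bilin_tm. Qed.

Lemma mAA_linl y : islin (fun x => mAA x y).
Proof. exact: tlift_lin (bilin_mAA_out y). Qed.

Lemma mAA_linr x : islin (mAA x).
Proof. by apply: tlift_lin_param => a b; apply: tlift_lin; exact: bilin_tm. Qed.


Lemma bilin_tlift_self (P : lmodType k) (U V W : lmodType k) (T : tensor U V)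
  (G : P -> U -> V -> W) :
  (forall a, bilin (G a)) -> (forall b c, islin (fun a => G a b c)) ->
  bilin (fun a (w : T) => tlift (G a) w).
Proof.
move=> HG HG'; split.
- move=> w c a a'; rewrite -tlift_linf; apply: tlift_ext => u v; exact: HG'.
- move=> a; exact: tlift_lin.
Qed.

Lemma bilin_epsl : bilin (fun a (b : A) => eps a *: b).
Proof.
split=> [b|a] c x y /=.
- by rewrite (eps_lin H) scalerDl scalerA.
- by rewrite scalerDr !scalerA mulrC.
Qed.

Lemma bilin_epsr : bilin (fun (a : A) b => eps b *: a).
Proof.
split=> [b|a] c x y /=.
- by rewrite scalerDr !scalerA mulrC.
- by rewrite (eps_lin H) scalerDl scalerA.
Qed.

Lemma epsl_t a b : epsl eps (tA a b) = eps a *: b.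
Proof. by rewrite /epsl /t tlift_t //; exact: bilin_epsl. Qed.
Lemma epsr_t a b : epsr eps (tA a b) = eps b *: a.
Proof. by rewrite /epsr /t tlift_t //; exact: bilin_epsr. Qed.
Lemma epsl_lin : islin (epsl eps (AA:=AA)).
Proof. exact: tlift_lin bilin_epsl. Qed.
Lemma epsr_lin : islin (epsr eps (AA:=AA)).
Proof. exact: tlift_lin bilin_epsr. Qed.

Lemma mu_t a b : mu mul (tA a b) = mul a b.
Proof. by rewrite /mu /t tlift_t //; exact: mul_bilin H. Qed.
Lemma mu_lin : islin (mu mul (AA:=AA)).
Proof. exact: tlift_lin (mul_bilin H). Qed.

Lemma lmul1b_t b p q : lmul1b mul b (tA p q) = tA p (mul b q).
Proof. by rewrite /lmul1b /t tlift_t //; exact: (bilin_comp (g:=fun x => x) bilin_t (islin_id (U:=A)) (mul_l b)). Qed.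
Lemma lmul1b_lin b : islin (lmul1b mul b (AA:=AA)).
Proof. exact: tlift_lin (bilin_comp (g:=fun x => x) bilin_t (islin_id (U:=A)) (mul_l b)). Qed.
Lemma rmul1b_t b p q : rmul1b mul b (tA p q) = tA p (mul q b).
Proof. by rewrite /rmul1b /t tlift_t //; exact: (bilin_comp (g:=fun x => x) bilin_t (islin_id (U:=A)) (mul_r b)). Qed.
Lemma rmul1b_lin b : islin (rmul1b mul b (AA:=AA)).
Proof. exact: tlift_lin (bilin_comp (g:=fun x => x) bilin_t (islin_id (U:=A)) (mul_r b)). Qed.
Lemma lmulb1_t b p q : lmulb1 mul b (tA p q) = tA (mul b p) q.
Proof. by rewrite /lmulb1 /t tlift_t //; exact: (bilin_comp (h:=fun x => x) bilin_t (mul_l b) (islin_id (U:=A))). Qed.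
Lemma lmulb1_lin b : islin (lmulb1 mul b (AA:=AA)).
Proof. exact: tlift_lin (bilin_comp (h:=fun x => x) bilin_t (mul_l b) (islin_id (U:=A))). Qed.
Lemma rmulb1_t b p q : rmulb1 mul b (tA p q) = tA (mul p b) q.
Proof. by rewrite /rmulb1 /t tlift_t //; exact: (bilin_comp (h:=fun x => x) bilin_t (mul_r b) (islin_id (U:=A))). Qed.
Lemma rmulb1_lin b : islin (rmulb1 mul b (AA:=AA)).
Proof. exact: tlift_lin (bilin_comp (h:=fun x => x) bilin_t (mul_r b) (islin_id (U:=A))). Qed.

Lemma bilin_reassoc_in (c : A) : bilin (fun x y => t3A x (tA y c)).
Proof. exact: (bilin_comp (g:=fun x => x) (tm_bilin A3) (islin_id (U:=A)) (t_l c)). Qed.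

Lemma reassoc_t x y c : reassoc A3 (tA x y) c = t3A x (tA y c).
Proof. by rewrite /reassoc /t tlift_t //; exact: bilin_reassoc_in. Qed.
Lemma reassoc_linz c : islin (fun z => reassoc A3 z c).
Proof. exact: tlift_lin (bilin_reassoc_in c). Qed.
Lemma reassoc_linc z : islin (reassoc A3 z).
Proof.
apply: tlift_lin_param => x y; apply: islin_comp (t3_r x) _.
by apply: islin_comp (t_r y) _.
Qed.

Section Ten1.
Variables (F : AA -> AA) (g : A -> A).
Hypotheses (HF : islin F) (Hg : islin g).

Lemma bilin_ten1_in a : bilin (fun b c => reassoc A3 (F (tA a b)) (g c)).
Proof.
split=> [c|b] x u v /=.
- by rewrite (t_r a) HF (reassoc_linz (g c)).
- by rewrite Hg reassoc_linc.
Qed.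

Lemma bilin_ten1_out : bilin (fun a (w : AA) =>
  tlift (fun b c => reassoc A3 (F (tA a b)) (g c)) w).
Proof.
apply: bilin_tlift_self => [a|b c]; first exact: bilin_ten1_in.
move=> x u v /=; by rewrite (t_l b) HF (reassoc_linz (g c)).
Qed.

Lemma ten1_t a b c : ten1 F g (t3A a (tA b c)) = reassoc A3 (F (tA a b)) (g c).
Proof.
rewrite /ten1 /t3 tlift_t; last exact: bilin_ten1_out.
by rewrite /t tlift_t //; exact: bilin_ten1_in.
Qed.

Lemma ten1_lin : islin (ten1 (A3:=A3) F g).
Proof. exact: tlift_lin bilin_ten1_out. Qed.

End Ten1.

Lemma ten1_reassoc F z c : islin F -> ten1 F id (reassoc A3 z c) = reassoc A3 (F z) c.
Proof.
move=> HF.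
apply: (tensor_ext (g1 := fun z => ten1 F id (reassoc A3 z c)) (g2 := fun z => reassoc A3 (F z) c)).
- exact: islin_comp (ten1_lin HF (islin_id (U:=A))) (reassoc_linz c).
- exact: islin_comp (reassoc_linz c) HF.
- by move=> x y /=; rewrite reassoc_t ten1_t //; exact: islin_id.
Qed.

Lemma bilin_one_ten (g : A -> A) (F : AA -> AA) :
  islin g -> islin F -> bilin (fun a w => t3A (g a) (F w)).
Proof. move=> Hg HF; exact: bilin_comp (tm_bilin A3) Hg HF. Qed.

Lemma one_ten_t g F a w : islin g -> islin F ->
  one_ten g F (t3A a w) = t3A (g a) (F w).
Proof. by move=> Hg HF; rewrite /one_ten /t3 tlift_t //; exact: bilin_one_ten. Qed.

Lemma one_ten_lin g F : islin g -> islin F -> islin (one_ten (A3:=A3) g F).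
Proof. by move=> Hg HF; apply: tlift_lin; exact: bilin_one_ten. Qed.


Lemma cancel_l (X Y : A) : (forall a, mul a X = mul a Y) -> X = Y.
Proof.
move=> HXY; apply/eqP; rewrite -subr_eq0; apply/eqP; apply: (A_nondeg_l H) => a.
by rewrite linB ?HXY ?subrr //; exact: mul_l.
Qed.

Lemma cancel_r (X Y : A) : (forall a, mul X a = mul Y a) -> X = Y.
Proof.
move=> HXY; apply/eqP; rewrite -subr_eq0; apply/eqP; apply: (A_nondeg_r H) => a.
by rewrite (linB _ _ (mul_r a)) HXY subrr.
Qed.

Lemma Adec a : exists s : seq (A * A), a = \sum_(p <- s) mul p.1 p.2.
Proof.
have [y <-] := A_idem H a; have [s ->] := tm_span y.
exists s; rewrite lin_sum; last exact: mu_lin.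
by apply: eq_bigr => p _; rewrite mu_t.
Qed.

Lemma eps0 : eps 0 = 0.
Proof. exact: (lin0 eps_islin). Qed.
Lemma epsZ c x : eps (c *: x) = c * eps x.
Proof. by have := eps_lin H c x 0; rewrite !addr0 eps0 addr0. Qed.
Lemma epsD x y : eps (x + y) = eps x + eps y.
Proof. by have := eps_lin H 1 x y; rewrite scale1r mul1r. Qed.

Lemma L_lmul1b b w : el (lmul1b mul b w) = mul b (el w).
Proof.
apply: (tensor_ext (g1 := fun w => el (lmul1b mul b w)) (g2 := fun w => mul b (el w))).
- exact: islin_comp epsl_lin (lmul1b_lin b).
- exact: islin_comp (mul_l b) epsl_lin.
- by move=> u v /=; rewrite lmul1b_t !epsl_t (linZ _ _ (mul_l b)).
Qed.

Lemma L_rmul1b b w : el (rmul1b mul b w) = mul (el w) b.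
Proof.
apply: (tensor_ext (g1 := fun w => el (rmul1b mul b w)) (g2 := fun w => mul (el w) b)).
- exact: islin_comp epsl_lin (rmul1b_lin b).
- exact: islin_comp (mul_r b) epsl_lin.
- by move=> u v /=; rewrite rmul1b_t !epsl_t (linZ _ _ (mul_r b)).
Qed.

Lemma L_lmulb1r b w : er (lmulb1 mul b w) = mul b (er w).
Proof.
apply: (tensor_ext (g1 := fun w => er (lmulb1 mul b w)) (g2 := fun w => mul b (er w))).
- exact: islin_comp epsr_lin (lmulb1_lin b).
- exact: islin_comp (mul_l b) epsr_lin.
- by move=> u v /=; rewrite lmulb1_t !epsr_t (linZ _ _ (mul_l b)).
Qed.

Lemma eps_epsl_epsr w : eps (el w) = eps (er w).
Proof.
apply: (tensor_ext (g1 := fun w => (eps (el w) : k^o)) (g2 := fun w => (eps (er w) : k^o))).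
- exact: islin_comp eps_islin epsl_lin.
- exact: islin_comp eps_islin epsr_lin.
- by move=> u v /=; rewrite epsl_t epsr_t !epsZ mulrC.
Qed.

Lemma ELD p a b : EL (DL p (tA a b)) = DL p (tA a b).
Proof.
have : inspan (fun q : A * A * A => DL q.1.1 (t AA q.1.2 q.2)) (DL p (tA a b)).
  by exists [:: (1, (p, a, b))]; rewrite big_cons big_nil scale1r addr0.
move/(ax_iv_l H) => [s ->].
rewrite lin_sum; last exact: EL_lin.
apply: eq_bigr => q _; rewrite (linZ _ _ EL_lin); congr (_ *: _).
by rewrite (proj1 (E_idem H)).
Qed.

Lemma ERD p a b : ER (DR p (tA a b)) = DR p (tA a b).
Proof.
have : inspan (fun q : A * A * A => DR q.1.1 (t AA q.1.2 q.2)) (DR p (tA a b)).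
  by exists [:: (1, (p, a, b))]; rewrite big_cons big_nil scale1r addr0.
move/(ax_iv_r H) => [s ->].
rewrite lin_sum; last exact: ER_lin.
apply: eq_bigr => q _; rewrite (linZ _ _ ER_lin); congr (_ *: _).
by rewrite (proj2 (E_idem H)).
Qed.


Lemma islin_scale (U W : lmodType k) (f : U -> W) (c : k) :
  islin f -> islin (fun x => c *: f x).
Proof. by move=> Hf a x y; rewrite Hf scalerDr !scalerA mulrC. Qed.

Section Mult.
Hypothesis Hm : forall a b, eps (mul a b) = eps a * eps b.

Lemma M1 w p q : el (mAA w (tA p q)) = eps p *: mul (el w) q.
Proof.
apply: (tensor_ext (g1 := fun w => el (mAA w (tA p q))) (g2 := fun w => eps p *: mul (el w) q)).
- exact: islin_comp epsl_lin (mAA_linl _).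
- exact: islin_scale (islin_comp (mul_r q) epsl_lin).
- move=> u v /=; rewrite mAA_t !epsl_t (linZ _ _ (mul_r q)) Hm scalerA.
  by rewrite mulrC.
Qed.

Lemma M2 w p q : el (mAA (tA p q) w) = eps p *: mul q (el w).
Proof.
apply: (tensor_ext (g1 := fun w => el (mAA (tA p q) w)) (g2 := fun w => eps p *: mul q (el w))).
- exact: islin_comp epsl_lin (mAA_linr _).
- exact: islin_scale (islin_comp (mul_l q) epsl_lin).
- by move=> u v /=; rewrite mAA_t !epsl_t (linZ _ _ (mul_l q)) Hm scalerA.
Qed.

Lemma M3 w p q : er (mAA w (tA p q)) = eps q *: mul (er w) p.
Proof.
apply: (tensor_ext (g1 := fun w => er (mAA w (tA p q))) (g2 := fun w => eps q *: mul (er w) p)).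
- exact: islin_comp epsr_lin (mAA_linl _).
- exact: islin_scale (islin_comp (mul_r p) epsr_lin).
- move=> u v /=; rewrite mAA_t !epsr_t (linZ _ _ (mul_r p)) Hm scalerA.
  by rewrite mulrC.
Qed.

Lemma M4 w p q : er (mAA (tA p q) w) = eps q *: mul p (er w).
Proof.
apply: (tensor_ext (g1 := fun w => er (mAA (tA p q) w)) (g2 := fun w => eps q *: mul p (er w))).
- exact: islin_comp epsr_lin (mAA_linr _).
- exact: islin_scale (islin_comp (mul_l p) epsr_lin).
- by move=> u v /=; rewrite mAA_t !epsr_t (linZ _ _ (mul_l p)) Hm scalerA.
Qed.

Lemma DLl a b c : el (DL a (tA b c)) = eps b *: mul a c.
Proof.
have [s ->] := Adec c.
rewrite (lin_sum _ _ (t_r b)) (lin_sum _ _ (DL_lin a)) (lin_sum _ _ epsl_lin).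
rewrite (lin_sum _ _ (mul_l a)) scaler_sumr; apply: eq_bigr => p _.
rewrite -lmul1b_t -(proj1 (T1_def H a p.1 _)) M1 (proj1 (ax_iii H _)) mu_t.
by rewrite (mul_assoc H).
Qed.

Lemma LDR c x y : el (DR c (tA x y)) = eps x *: mul y c.
Proof.
apply: cancel_r => z.
rewrite -L_rmul1b -(proj2 (T1_def H c z _)) M2 (proj1 (ax_iii H _)) mu_t.
by rewrite (linZ _ _ (mul_r z)) (mul_assoc H).
Qed.

Lemma DLr x p q : er (DL x (tA p q)) = eps q *: mul x p.
Proof.
apply: cancel_l => z.
rewrite -L_lmulb1r -(proj1 (T2_def H z x _)) M3 (proj2 (ax_iii H _)) mu_t.
by rewrite (linZ _ _ (mul_l z)) (mul_assoc H).
Qed.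

Lemma RD b a y : er (DR b (tA a y)) = eps y *: mul a b.
Proof.
have [s ->] := Adec a.
rewrite (lin_sum _ _ (t_l y)) (lin_sum _ _ (DR_lin b)) (lin_sum _ _ epsr_lin).
rewrite (lin_sum _ _ (mul_r b)) scaler_sumr; apply: eq_bigr => p _.
rewrite -rmulb1_t -(proj2 (T2_def H p.2 b _)) M4 (proj2 (ax_iii H _)) mu_t.
by rewrite (mul_assoc H).
Qed.

Lemma F1 b c : el (EL (tA b c)) = eps b *: c.
Proof.
apply: cancel_l => a.
by rewrite -L_lmul1b (ax_vi_1 H) DLl (linZ _ _ (mul_l a)).
Qed.

Lemma F1g w : el (EL w) = el w.
Proof.
apply: (tensor_ext (g1 := fun w => el (EL w)) (g2 := el)).
- exact: islin_comp epsl_lin EL_lin.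
- exact: epsl_lin.
- by move=> u v /=; rewrite F1 epsl_t.
Qed.

Lemma F1R a b : el (ER (tA a b)) = eps a *: b.
Proof.
apply: cancel_r => c.
by rewrite -L_rmul1b (ax_vi_2 H) LDR (linZ _ _ (mul_r c)).
Qed.

Lemma F1Rg w : el (ER w) = el w.
Proof.
apply: (tensor_ext (g1 := fun w => el (ER w)) (g2 := el)).
- exact: islin_comp epsl_lin ER_lin.
- exact: epsl_lin.
- by move=> u v /=; rewrite F1R epsl_t.
Qed.

End Mult.

Definition Th (u : A3) : AA := tlift (fun a w => tA a (el w)) u.
Definition Th1 (u : A3) : AA := tlift (fun a (w : AA) => eps a *: w) u.

Lemma bilin_Th : bilin (fun a (w : AA) => tA a (el w)).
Proof. exact: (bilin_comp (g := fun x => x) bilin_t (islin_id (U:=A)) epsl_lin). Qed.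
Lemma bilin_Th1 : bilin (fun a (w : AA) => eps a *: w).
Proof.
split=> [w|a] c x y /=.
- by rewrite (eps_lin H) scalerDl scalerA.
- by rewrite scalerDr !scalerA mulrC.
Qed.

Lemma Th_t3 a w : Th (t3A a w) = tA a (el w).
Proof. by rewrite /Th /t3 tlift_t //; exact: bilin_Th. Qed.
Lemma Th1_t3 a w : Th1 (t3A a w) = eps a *: w.
Proof. by rewrite /Th1 /t3 tlift_t //; exact: bilin_Th1. Qed.
Lemma Th_lin : islin Th. Proof. exact: tlift_lin bilin_Th. Qed.
Lemma Th1_lin : islin Th1. Proof. exact: tlift_lin bilin_Th1. Qed.

Lemma Th_reassoc z c : Th (reassoc A3 z c) = tA (er z) c.
Proof.
apply: (tensor_ext (g1 := fun z => Th (reassoc A3 z c)) (g2 := fun z => tA (er z) c)).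
- exact: islin_comp Th_lin (reassoc_linz c).
- exact: islin_comp (t_l c) epsr_lin.
- by move=> x y /=; rewrite reassoc_t Th_t3 epsl_t epsr_t (linZ _ _ (t_r x)) (linZ _ _ (t_l c)).
Qed.

Lemma Th1_reassoc z c : Th1 (reassoc A3 z c) = tA (el z) c.
Proof.
apply: (tensor_ext (g1 := fun z => Th1 (reassoc A3 z c)) (g2 := fun z => tA (el z) c)).
- exact: islin_comp Th1_lin (reassoc_linz c).
- exact: islin_comp (t_l c) epsl_lin.
- by move=> x y /=; rewrite reassoc_t Th1_t3 epsl_t (linZ _ _ (t_l c)).
Qed.

Lemma K x a b c : ten1 EL id (DidL mul DL x (t3A a (tA b c))) = DidL mul DL x (t3A a (tA b c)).
Proof.
rewrite /DidL (tlift_map _ _ (ten1_lin EL_lin (islin_id (U:=A)))).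
apply: tlift_ext => p q.
rewrite ten1_t ?ten1_reassoc ?ELD //; by [exact: EL_lin | exact: DL_lin | exact: mul_l].
Qed.

Lemma K' x a b c : ten1 ER id (DidR mul DR x (t3A a (tA b c))) = DidR mul DR x (t3A a (tA b c)).
Proof.
rewrite /DidR (tlift_map _ _ (ten1_lin ER_lin (islin_id (U:=A)))).
apply: tlift_ext => p q.
rewrite ten1_t ?ten1_reassoc ?ERD //; by [exact: ER_lin | exact: DR_lin | exact: mul_r].
Qed.

Section Mult2.
Hypothesis Hm : forall a b, eps (mul a b) = eps a * eps b.

Lemma Th_oneEL v : Th (one_ten id EL v) = Th v.
Proof.
apply: (tensor_ext (g1 := fun v => Th (one_ten id EL v)) (g2 := Th)).
- exact: islin_comp Th_lin (one_ten_lin (islin_id (U:=A)) EL_lin).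
- exact: Th_lin.
- move=> a w /=; rewrite one_ten_t ?Th_t3 ?F1g //; by [exact: islin_id | exact: EL_lin].
Qed.

Lemma Th_oneER v : Th (one_ten id ER v) = Th v.
Proof.
apply: (tensor_ext (g1 := fun v => Th (one_ten id ER v)) (g2 := Th)).
- exact: islin_comp Th_lin (one_ten_lin (islin_id (U:=A)) ER_lin).
- exact: Th_lin.
- move=> a w /=; rewrite one_ten_t ?Th_t3 ?F1Rg //; by [exact: islin_id | exact: ER_lin].
Qed.

Lemma Th1_oneEL v : Th1 (one_ten id EL v) = EL (Th1 v).
Proof.
apply: (tensor_ext (g1 := fun v => Th1 (one_ten id EL v)) (g2 := fun v => EL (Th1 v))).
- exact: islin_comp Th1_lin (one_ten_lin (islin_id (U:=A)) EL_lin).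
- exact: islin_comp EL_lin Th1_lin.
- move=> a w /=; rewrite one_ten_t ?Th1_t3 ?(linZ _ _ EL_lin) //; by [exact: islin_id | exact: EL_lin].
Qed.

Lemma Th1_oneER v : Th1 (one_ten id ER v) = ER (Th1 v).
Proof.
apply: (tensor_ext (g1 := fun v => Th1 (one_ten id ER v)) (g2 := fun v => ER (Th1 v))).
- exact: islin_comp Th1_lin (one_ten_lin (islin_id (U:=A)) ER_lin).
- exact: islin_comp ER_lin Th1_lin.
- move=> a w /=; rewrite one_ten_t ?Th1_t3 ?(linZ _ _ ER_lin) //; by [exact: islin_id | exact: ER_lin].
Qed.

Lemma Th_DidL x a b c : Th (DidL mul DL x (t3A a (tA b c))) = eps b *: mAA x (tA a c).
Proof.
rewrite /DidL (tlift_map _ _ Th_lin) mAA_tr -tlift_scale; apply: tlift_ext => p q.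
rewrite ten1_t ?Th_reassoc ?DLr ?(linZ _ _ (t_l _)) //; by [exact: DL_lin | exact: mul_l].
Qed.

Lemma Th1_DidL x a b c : Th1 (DidL mul DL x (t3A a (tA b c))) = eps a *: mAA x (tA b c).
Proof.
rewrite /DidL (tlift_map _ _ Th1_lin) mAA_tr -tlift_scale; apply: tlift_ext => p q.
rewrite ten1_t ?Th1_reassoc ?DLl ?(linZ _ _ (t_l _)) //; by [exact: DL_lin | exact: mul_l].
Qed.

Lemma Th_DidR x a b c : Th (DidR mul DR x (t3A a (tA b c))) = eps b *: mAA (tA a c) x.
Proof.
rewrite /DidR (tlift_map _ _ Th_lin) mAA_tl -tlift_scale; apply: tlift_ext => p q.
rewrite ten1_t ?Th_reassoc ?RD ?(linZ _ _ (t_l _)) //; by [exact: DR_lin | exact: mul_r].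
Qed.

Lemma Th1_DidR x a b c : Th1 (DidR mul DR x (t3A a (tA b c))) = eps a *: mAA (tA b c) x.
Proof.
rewrite /DidR (tlift_map _ _ Th1_lin) mAA_tl -tlift_scale; apply: tlift_ext => p q.
rewrite ten1_t ?Th1_reassoc ?LDR ?(linZ _ _ (t_l _)) //; by [exact: DR_lin | exact: mul_r].
Qed.

Variable e : A.
Hypothesis He : eps e != 0.

Lemma R1 x b c : EL (mAA x (tA b c)) = mAA (EL x) (tA b c).
Proof.
have [E3L [E3R [_ _ [HdL HdR _ _] [_ HR] [HL _]]]] := ax_v H.
set u := t3A e (tA b c).
have E1 : Th1 (E3L (DidL mul DL x u)) = eps e *: EL (mAA x (tA b c)).
  by rewrite -HL K Th1_oneEL Th1_DidL (linZ _ _ EL_lin).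
have E2 : Th1 (E3L (DidL mul DL x u)) = eps e *: mAA (EL x) (tA b c).
  by rewrite HdL Th1_DidL.
by apply: (scalerI He); rewrite -E1 E2.
Qed.

Lemma R2 x a c : mAA (EL x) (tA a c) = mAA x (tA a c).
Proof.
have [E3L [E3R [_ _ [HdL HdR _ _] [_ HR] [HL _]]]] := ax_v H.
set u := t3A a (tA e c).
have E1 : Th (E3L (DidL mul DL x u)) = eps e *: mAA x (tA a c).
  by rewrite -HL K Th_oneEL Th_DidL.
have E2 : Th (E3L (DidL mul DL x u)) = eps e *: mAA (EL x) (tA a c).
  by rewrite HdL Th_DidL.
by apply: (scalerI He); rewrite -E1 E2.
Qed.

Lemma R1' x b c : ER (mAA (tA b c) x) = mAA (tA b c) (ER x).
Proof.
have [E3L [E3R [_ _ [HdL HdR _ _] [_ HR] [HL _]]]] := ax_v H.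
set u := t3A e (tA b c).
have E1 : Th1 (E3R (DidR mul DR x u)) = eps e *: ER (mAA (tA b c) x).
  by rewrite -HR K' Th1_oneER Th1_DidR (linZ _ _ ER_lin).
have E2 : Th1 (E3R (DidR mul DR x u)) = eps e *: mAA (tA b c) (ER x).
  by rewrite HdR Th1_DidR.
by apply: (scalerI He); rewrite -E1 E2.
Qed.

Lemma R2' x a c : mAA (tA a c) (ER x) = mAA (tA a c) x.
Proof.
have [E3L [E3R [_ _ [HdL HdR _ _] [_ HR] [HL _]]]] := ax_v H.
set u := t3A a (tA e c).
have E1 : Th (E3R (DidR mul DR x u)) = eps e *: mAA (tA a c) x.
  by rewrite -HR K' Th_oneER Th_DidR.
have E2 : Th (E3R (DidR mul DR x u)) = eps e *: mAA (tA a c) (ER x).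
  by rewrite HdR Th_DidR.
by apply: (scalerI He); rewrite -E1 E2.
Qed.

End Mult2.

Lemma tdec b c : exists s1 s2 : seq (A * A),
  tA b c = \sum_(p <- s1) \sum_(q <- s2) mAA (tA p.1 q.1) (tA p.2 q.2).
Proof.
have [s1 Hb] := Adec b; have [s2 Hc] := Adec c; exists s1, s2.
rewrite Hb (lin_sum _ _ (t_l _)); apply: eq_bigr => p _.
rewrite Hc (lin_sum _ _ (t_r _)); apply: eq_bigr => q _.
by rewrite mAA_t.
Qed.

Section Mult3.
Hypothesis Hm : forall a b, eps (mul a b) = eps a * eps b.
Variable e : A.
Hypothesis He : eps e != 0.

Lemma EL_id x : EL x = x.
Proof.
apply: (tensor_ext (g1 := EL) (g2 := fun x => x)); [exact: EL_lin | exact: islin_id |].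
move=> u v; change (EL (tA u v) = tA u v); have [s1 [s2 ->]] := tdec u v.
rewrite (lin_sum _ _ EL_lin); apply: eq_bigr => p _.
rewrite (lin_sum _ _ EL_lin); apply: eq_bigr => q _.
by rewrite (R1 Hm He) (R2 Hm He).
Qed.

Lemma ER_id x : ER x = x.
Proof.
apply: (tensor_ext (g1 := ER) (g2 := fun x => x)); [exact: ER_lin | exact: islin_id |].
move=> u v; change (ER (tA u v) = tA u v); have [s1 [s2 ->]] := tdec u v.
rewrite (lin_sum _ _ ER_lin); apply: eq_bigr => p _.
rewrite (lin_sum _ _ ER_lin); apply: eq_bigr => q _.
by rewrite (R1' Hm He) (R2' Hm He).
Qed.

Lemma I2_3a a b : PiL_l eps T2 a b = eps a *: b.
Proof.
rewrite /PiL_l; apply: cancel_l => q; apply: (scalerI He).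
rewrite -M2 // (proj2 (T2_def H a b _)) rmulb1_t LDR // Hm.
by rewrite (linZ _ _ (mul_l q)) !scalerA.
Qed.

Lemma I2_4b a b : PiR_r eps T1 a b = eps a *: b.
Proof.
rewrite /PiR_r; apply: cancel_r => p; apply: (scalerI He).
rewrite -(M3 Hm _ p e) (proj1 (T1_def H b a _)) lmul1b_t DLr // Hm.
by rewrite (linZ _ _ (mul_r p)) !scalerA mulrC.
Qed.

End Mult3.

Lemma I12 : (forall x, ER x = x) -> forall a b, eps (mul a b) = eps a * eps b.
Proof.
move=> HER.
have bilF : forall a', bilin (fun u (v : A) => eps (mul a' u) *: v).
  move=> a'; split=> [v|u] c x y /=.
  - by rewrite (mul_l a') (eps_lin H) scalerDl scalerA.
  - by rewrite scalerDr !scalerA mulrC.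
have step : forall a' a c, eps (mul a' (mul a c)) = eps (mul a' a) * eps c.
  move=> a' a c.
  pose F := fun X : AA => tlift (fun u v => eps (mul a' u) *: v) X.
  have Lf : forall b X, el (mAA (tA a' b) X) = mul b (F X).
    move=> b X.
    apply: (tensor_ext (g1 := fun X => el (mAA (tA a' b) X)) (g2 := fun X => mul b (F X))).
    + exact: islin_comp epsl_lin (mAA_linr _).
    + exact: islin_comp (mul_l b) (tlift_lin (bilF a')).
    + move=> u v /=; rewrite mAA_t epsl_t /F /t tlift_t; last exact: bilF.
      by rewrite (linZ _ _ (mul_l b)).
  have HF : F (T2 (tA a c)) = eps (mul a' a) *: c.
    apply: cancel_l => b; rewrite -Lf (proj2 (T2_def H a c _)) rmulb1_t.
    rewrite -(ax_vi_2 H) HER rmul1b_t epsl_t.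
    by rewrite (linZ _ _ (mul_l b)).
  have Le : forall X, eps (F X) = eps (mul a' (er X)).
    apply: (tensor_ext (g1 := fun X => (eps (F X) : k^o)) (g2 := fun X => (eps (mul a' (er X)) : k^o))).
    + exact: islin_comp eps_islin (tlift_lin (bilF a')).
    + exact: islin_comp eps_islin (islin_comp (mul_l a') epsr_lin).
    + move=> u v /=; rewrite /F /t tlift_t; last exact: bilF.
      by rewrite epsr_t (linZ _ _ (mul_l a')) !epsZ mulrC.
  by rewrite -[mul a c]mu_t -(proj2 (ax_iii H _)) -Le HF epsZ.
move=> x c; have [s ->] := Adec x.
rewrite (lin_sum _ _ (mul_r c)).
rewrite (lin_sum _ _ eps_islin) (lin_sum _ _ eps_islin) mulr_suml.
by apply: eq_bigr => p _; rewrite -(mul_assoc H) step.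
Qed.

Lemma I3_2 : (forall a b, PiL_l eps T2 a b = eps a *: b) ->
  forall a b, eps (mul a b) = eps a * eps b.
Proof.
move=> HP a b.
by rewrite -mu_t -(proj2 (ax_iii H _)) -eps_epsl_epsr -/(PiL_l eps T2 a b) HP epsZ.
Qed.

Lemma I4_2 : (forall a b, PiR_r eps T1 a b = eps a *: b) ->
  forall a b, eps (mul a b) = eps a * eps b.
Proof.
move=> HP a b.
by rewrite -mu_t -(proj1 (ax_iii H _)) eps_epsl_epsr -/(PiR_r eps T1 b a) HP epsZ mulrC.
Qed.

Lemma triv : (forall a, eps a = 0) -> forall a : A, a = 0.
Proof.
move=> H0 a; have [y <-] := A_idem H a; rewrite -(proj1 (ax_iii H _)).
apply: (tensor_ext (g1 := el) (g2 := fun _ => 0)); [exact: epsl_lin | | ].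
- by move=> c x z; rewrite scaler0 addr0.
- by move=> u v; rewrite epsl_t H0 scale0r.
Qed.

Lemma trivAA : (forall a, eps a = 0) -> forall x : AA, x = 0.
Proof.
move=> H0 x.
apply: (tensor_ext (g1 := fun x => x) (g2 := fun _ => 0)); [exact: islin_id | | ].
- by move=> c y z; rewrite scaler0 addr0.
- by move=> u v; change (tA u v = 0); rewrite (triv H0 u) (lin0 (t_l v)).
Qed.

End WM.

Theorem theorem2p11 (k : fieldType) (A : lmodType k) (mul : A -> A -> A)
  (AA : tensor A A) (A3 : tensor A AA)
  (EL ER : AA -> AA) (DL DR : A -> AA -> AA) (eps : A -> k)
  (T1 T2 : AA -> AA) :
  is_wmba mul A3 eps EL ER DL DR T1 T2 ->
  [<-> (forall x, EL x = x) /\ (forall x, ER x = x);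
       forall a b, eps (mul a b) = eps a * eps b;
       forall a, (forall b, PiL_l eps T2 a b = eps a *: b) /\
                 (forall b, PiL_r eps ER a b = eps a *: b);
       forall a, (forall b, PiR_l eps EL a b = eps a *: b) /\
                 (forall b, PiR_r eps T1 a b = eps a *: b)].
Proof.
move=> H.
have [[e He]|Hno] := classic (exists e, eps e != 0).
- split; [|split; [|split]].
  + by move=> [_ HER]; exact: I12 H HER.
  + move=> Hm a; split=> b.
    * exact: (I2_3a H Hm He a b).
    * exact: (F1R H Hm a b).
  + move=> HP; have Hm := I3_2 H (fun a b => proj1 (HP a) b).
    move=> a; split=> b.
    * by rewrite /PiR_l (EL_id H Hm He) (epsr_t H).
    * exact: (I2_4b H Hm He a b).
  + move=> HP; have Hm := I4_2 H (fun a b => proj2 (HP a) b).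
    by split; [exact: (EL_id H Hm He) | exact: (ER_id H Hm He)].
- have H0 : forall a, eps a = 0.
    move=> a; case: (eqVneq (eps a) 0) => // Hn; exfalso; apply: Hno; by exists a.
  have Z := triv H H0; have ZZ := trivAA H H0.
  split; [|split; [|split]] => _.
  + by move=> a b; rewrite !H0 mulr0.
  + by move=> a; split=> b; rewrite (Z b) scaler0; apply: Z.
  + by move=> a; split=> b; rewrite (Z b) scaler0; apply: Z.
  + by split=> x; rewrite [RHS]ZZ; apply: ZZ.
Qed.
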